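(* Let $H$ be an ASC-hypergraph and $M\subseteq H$. Then every $M$-antichain misses $H$ if and only if there is a construction $K$ of $H$ with $M\subseteq K$.
   Context: A hypergraph is a finite set $H$ of nonempty subsets of some finite set; its carrier is $\bigcup H$. For a family $F$ and set $Y$, $F_Y=\{X\in F\mid X\subseteq Y\}$. A hypergraph partition of $H$ is a partition $\{H_1,\dots,H_n\}$ ($n\ge0$) of the set $H$ with $\{\bigcup H_1,\dots,\bigcup H_n\}$ a partition of $\bigcup H$; $H$ is connected if it has exactly one hypergraph partition; the finest hypergraph partition is the unique one whose blocks are connected. $H$ is atomic if $\{x\}\in H$ for all $x\in\bigcup H$; saturated if $X_1,X_2\in H$ with $X_1\cap X_2\neq\emptyset$ imply $X_1\cup X_2\in H$. An ASC-hypergraph is one that is atomic, saturated and connected. Constructions of an atomic $H$, by induction on $|\bigcup H|$: (0) $\emptyset$ is the only construction of $\emptyset$; (1) if $|\bigcup H|\ge1$, $H$ connected, $x\in\bigcup H$, $K$ a construction of $H_{\bigcup H\setminus\{x\}}$, then $K\cup\{\bigcup H\}$ is a construction of $H$; (2) if $H$ is not connected with finest hypergraph partition $\{H_1,\dots,H_n\}$, $n\ge2$, and $K_i$ is a construction of $H_i$, then $K_1\cup\dots\cup K_n$ is a construction of $H$. For $M\subseteq H$, an $M$-antichain is a subset $S\subseteq M$ with $|S|\ge2$ such that no member of $S$ is a subset of another member of $S$; it misses $H$ when $\bigcup S\notin H$. *)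

(* Defs.v *)
From mathcomp Require Import all_boot.
Set Implicit Arguments. Unset Strict Implicit. Unset Printing Implicit Defensive.

Section Hyper.
Variable T : finType.
Implicit Types (H F M S K : {set {set T}}) (Y X : {set T}).

(* H is a hypergraph: every member is nonempty. Its carrier is [cover H]. *)
Definition hypergraph H : Prop := forall X, X \in H -> X != set0.

Definition restr F Y : {set {set T}} := [set X in F | X \subset Y].

(* P = {H_1,...,H_n} is a hypergraph partition of H: P partitions the set H
   (blocks nonempty, pairwise disjoint, union H) and the unions of distinct
   blocks are disjoint (so {cover H_1,...,cover H_n} is a partition of
   cover H, indexed injectively). *)
Definition hpartition H (P : {set {set {set T}}}) : Prop :=
  partition P H /\
  (forall B1 B2, B1 \in P -> B2 \in P -> B1 != B2 ->
     [disjoint cover B1 & cover B2]).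

Definition connected H : Prop :=
  exists P, hpartition H P /\ forall P', hpartition H P' -> P' = P.

Definition finest_hpartition H (P : {set {set {set T}}}) : Prop :=
  hpartition H P /\ forall B, B \in P -> connected B.

Definition atomic H : Prop := forall x, x \in cover H -> [set x] \in H.

Definition saturated H : Prop :=
  forall X1 X2, X1 \in H -> X2 \in H -> X1 :&: X2 != set0 -> X1 :|: X2 \in H.

Definition ASC H : Prop := [/\ hypergraph H, atomic H, saturated H & connected H].

Inductive construction : {set {set T}} -> {set {set T}} -> Prop :=
| constr_empty : construction set0 set0
| constr_conn H x K :
    atomic H -> 0 < #|cover H| -> connected H -> x \in cover H ->
    construction (restr H (cover H :\ x)) K ->
    construction H (cover H |: K)
| constr_split H (P : {set {set {set T}}}) (Kf : {set {set T}} -> {set {set T}}) :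
    atomic H -> ~ connected H -> finest_hpartition H P -> 2 <= #|P| ->
    (forall B, B \in P -> construction B (Kf B)) ->
    construction H (\bigcup_(B in P) Kf B).

Definition antichain M S : Prop :=
  [/\ S \subset M, 2 <= #|S| &
      forall X Y, X \in S -> Y \in S -> X \subset Y -> X = Y].

Definition misses H S : Prop := cover S \notin H.

End Hyper.

(* Main.v *)
Require Import Defs.
From mathcomp Require Import all_boot.
From Stdlib Require Import ClassicalEpsilon.
Set Implicit Arguments. Unset Strict Implicit. Unset Printing Implicit Defensive.

Section Aux.
Variable T : finType.
Implicit Types (H F M S K B : {set {set T}}) (Y X Z : {set T}).

Lemma sub_cover H X : X \in H -> X \subset cover H.
Proof. by move=> XH; rewrite /cover; apply: (bigcup_sup X). Qed.

Lemma meet_not_disj X (A B : {set T}) : X \subset A -> X \subset B -> X != set0 -> ~~ [disjoint A & B].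
Proof.
move=> XA XB /set0Pn [x xX]; apply/negP => dAB.
by have := disjointFr dAB (subsetP XA x xX); rewrite (subsetP XB x xX).
Qed.

Lemma cover_sub H H' : H \subset H' -> cover H \subset cover H'.
Proof.
move=> sHH'; apply/subsetP => x /bigcupP [X XH xX].
by apply/bigcupP; exists X => //; apply: (subsetP sHH').
Qed.

Lemma part_in H P X : partition P H -> X \in H -> exists2 B, B \in P & X \in B.
Proof.
by move=> /cover_partition <- /bigcupP.
Qed.

Lemma part_sub H P B : partition P H -> B \in P -> B \subset H.
Proof.
move=> /cover_partition <- BP; exact: (bigcup_sup B).
Qed.

Lemma constr_inv H K : construction H K ->
  (forall X, X \in K -> X != set0 /\ X \subset cover H) /\
  (forall S, S \subset K -> 2 <= #|S| ->
     (forall X Y, X \in S -> Y \in S -> X \subset Y -> X = Y) -> cover S \notin H).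
Proof.
elim=> {H K}.
- split=> [X|S]; first by rewrite inE.
  by move=> sS; rewrite inE.
- move=> H x K _ c0 _ xc _ [IH1 IH2].
  have sub': cover (restr H (cover H :\ x)) \subset cover H :\ x.
    apply/subsetP=> y /bigcupP [X]; rewrite inE => /andP [_ sX] yX.
    exact: (subsetP sX).
  split.
  + move=> X /setU1P [->|XK]; first by rewrite -card_gt0 c0.
    have [n0 sX] := IH1 X XK; split=> //.
    apply: (subset_trans sX); apply: (subset_trans sub'); exact: subsetDl.
  + move=> S sS cS anti.
    case: (boolP (cover H \in S)) => CS.
      case/card_gt1P: cS => [a [b [aS bS ab]]].
      have [Y YS YC] : exists2 Y, Y \in S & Y != cover H.
        case: (eqVneq a (cover H)) => [ea|na]; last by exists a.
        by exists b => //; rewrite -ea eq_sym.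
      have YK : Y \in K by move: (subsetP sS Y YS); case/setU1P => // e; rewrite e eqxx in YC.
      have [_ sY] := IH1 Y YK.
      have sYC : Y \subset cover H.
        apply: (subset_trans sY); apply: (subset_trans sub'); exact: subsetDl.
      by rewrite (anti _ _ YS CS sYC) eqxx in YC.
    have sSK : S \subset K.
      apply/subsetP=> Y YS; move: (subsetP sS Y YS); case/setU1P => // e.
      by rewrite -e YS in CS.
    have := IH2 S sSK cS anti; apply: contra => cH.
    rewrite inE cH /=; apply/subsetP=> y /bigcupP [Y YS yY].
    have [_ sY] := IH1 Y (subsetP sSK Y YS).
    exact: (subsetP sub' y (subsetP sY y yY)).
- move=> H P Kf _ _ [[pP dP] _] _ _ IH.
  split.
  + move=> X /bigcupP [B BP XK]; have [[n0 sX] _] := ((IH B BP).1 X XK, 0).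
    split=> //; apply: (subset_trans sX); apply: cover_sub; exact: part_sub pP BP.
  + move=> S sS cS anti; apply/negP => cSH.
    have [B' B'P cSB'] := part_in pP cSH.
    have sSK : S \subset Kf B'.
      apply/subsetP => Y YS; have /bigcupP [B1 B1P YK] := subsetP sS Y YS.
      have [n0 sY] := (IH B1 B1P).1 Y YK.
      case: (eqVneq B1 B') => [<-//|nB].
      have nd : ~~ [disjoint cover B1 & cover B'].
        apply: (meet_not_disj sY _ n0).
        exact: (subset_trans (sub_cover YS) (sub_cover cSB')).
      by rewrite (dP _ _ B1P B'P nB) in nd.
    have [_ IH2] := IH B' B'P.
    by have := IH2 S sSK cS anti; rewrite cSB'.
Qed.

Definition maxs H := [set Z in H | [forall Y in H, (Z \subset Y) ==> (Y == Z)]].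

Lemma maxsP H Z : reflect (Z \in H /\ forall Y, Y \in H -> Z \subset Y -> Y = Z) (Z \in maxs H).
Proof.
rewrite inE; apply: (iffP andP) => [[ZH /forall_inP fa]|[ZH fa]]; split => //.
- by move=> Y YH ZY; apply/eqP; have := fa Y YH; rewrite ZY.
- by apply/forall_inP => Y YH; apply/implyP => ZY; rewrite (fa Y YH ZY).
Qed.

Lemma maxs_sub H : maxs H \subset H.
Proof. by apply/subsetP => Z /maxsP []. Qed.

Lemma maxs_exists H X : X \in H -> exists2 Z, Z \in maxs H & X \subset Z.
Proof.
move=> XH; set A := [set Y in H | X \subset Y].
have XA : X \in A by rewrite inE XH subxx.
case: (arg_maxnP (fun Y => #|Y|) XA) => Z ZA Zmax.
have : Z \in A := ZA; rewrite inE => /andP [ZH XZ].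
have Zmax' : forall Y, Y \in A -> #|Y| <= #|Z| := Zmax.
exists Z => //; apply/maxsP; split => // Y YH ZY.
have YA : Y \in A by rewrite inE YH (subset_trans XZ ZY).
have := Zmax' Y YA => le; apply/esym/eqP; by rewrite eqEcard ZY le.
Qed.

Lemma maxs_eq H Z1 Z2 : saturated H -> Z1 \in maxs H -> Z2 \in maxs H ->
  Z1 :&: Z2 != set0 -> Z1 = Z2.
Proof.
move=> sat /maxsP [Z1H m1] /maxsP [Z2H m2] ne.
have U := sat _ _ Z1H Z2H ne.
by rewrite -(m1 _ U (subsetUl _ _)) -{2}(m2 _ U (subsetUr _ _)).
Qed.

Lemma restr_cover H Z : Z \in H -> cover (restr H Z) = Z.
Proof.
move=> ZH; apply/eqP; rewrite eqEsubset; apply/andP; split.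
- by apply/subsetP => x /bigcupP [X]; rewrite inE => /andP [_ XZ] xX; apply: (subsetP XZ).
- by apply: sub_cover; rewrite inE ZH subxx.
Qed.

Lemma restr_sub H Y : restr H Y \subset H.
Proof. by apply/subsetP => X; rewrite inE => /andP []. Qed.

Lemma restr_hyp H Y : hypergraph H -> hypergraph (restr H Y).
Proof. by move=> hH X; rewrite inE => /andP [XH _]; apply: hH. Qed.

Lemma restr_sat H Y : saturated H -> saturated (restr H Y).
Proof.
move=> sat X1 X2; rewrite !inE => /andP [X1H s1] /andP [X2H s2] ne.
by rewrite (sat _ _ X1H X2H ne) subUset s1 s2.
Qed.

Lemma restr_atomic H Y : atomic H -> atomic (restr H Y).
Proof.
move=> atH x /bigcupP [X]; rewrite inE => /andP [XH XY] xX.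
rewrite inE atH; last by apply/bigcupP; exists X.
by rewrite sub1set (subsetP XY).
Qed.

Definition PM H := [set restr H Z | Z in maxs H].

Lemma PM_disj H Z1 Z2 : saturated H -> Z1 \in maxs H -> Z2 \in maxs H ->
  restr H Z1 != restr H Z2 -> [disjoint Z1 & Z2].
Proof.
move=> sat m1 m2 ne; rewrite -setI_eq0; apply: contraR ne => ne.
by rewrite (maxs_eq sat m1 m2 ne).
Qed.

Lemma PM_hpart H : hypergraph H -> saturated H -> hpartition H (PM H).
Proof.
move=> hH sat; split.
- apply/and3P; split.
  + apply/eqP/setP => X; apply/bigcupP/idP.
    * by case=> B /imsetP [Z _ ->]; rewrite inE => /andP [].
    * move=> XH; have [Z Zm XZ] := maxs_exists XH.
      by exists (restr H Z); [apply: imset_f | rewrite inE XH].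
  + apply/trivIsetP => A B /imsetP [Z1 m1 ->] /imsetP [Z2 m2 ->] ne.
    have d := PM_disj sat m1 m2 ne.
    rewrite -setI_eq0; apply/negPn/negP => /set0Pn [X /setIP []].
    rewrite !inE => /andP [XH s1] /andP [_ s2].
    by have := meet_not_disj s1 s2 (hH X XH); rewrite d.
  + apply/imsetP => [[Z /maxsP [ZH _] e]].
    have : Z \in restr H Z by rewrite inE ZH subxx.
    by rewrite -e inE.
- move=> B1 B2 /imsetP [Z1 m1 ->] /imsetP [Z2 m2 ->] ne.
  have /maxsP [Z1H _] := m1; have /maxsP [Z2H _] := m2.
  rewrite !restr_cover //; exact: (PM_disj sat m1 m2 ne).
Qed.

Lemma hyp1_hpart H : H != set0 -> hpartition H [set H].
Proof.
move=> ne; split.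
- by apply/and3P; split; [rewrite cover1 | apply: trivIset1 | rewrite in_set1 eq_sym].
- by move=> B1 B2 /set1P -> /set1P ->; rewrite eqxx.
Qed.

Lemma conn_cover H : hypergraph H -> cover H \in H -> connected H.
Proof.
move=> hH cH; have ne : H != set0 by apply/set0Pn; exists (cover H).
exists [set H]; split; first exact: hyp1_hpart.
move=> P' [pP dP]; have [B0 B0P cB0] := part_in pP cH.
have allB0 : forall B1, B1 \in P' -> B1 = B0.
  move=> B1 B1P; case: (eqVneq B1 B0) => // nB.
  have d := dP _ _ B1P B0P nB.
  have n0 : B1 != set0.
    by apply: contraTneq B1P => ->; case/and3P: pP.
  have [X XB1] := set0Pn _ n0.
  have XH : X \in H := subsetP (part_sub pP B1P) X XB1.
  have := meet_not_disj (sub_cover XB1)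
    (subset_trans (sub_cover XH) (sub_cover cB0)) (hH X XH).
  by rewrite d.
have eP : P' = [set B0].
  by apply/setP => B; rewrite in_set1; apply/idP/eqP => [/allB0 | ->].
have := cover_partition pP; by rewrite eP cover1 => ->.
Qed.

Lemma conn_cover_in H : hypergraph H -> saturated H -> connected H -> H != set0 ->
  cover H \in H.
Proof.
move=> hH sat [P [_ uP]] ne.
have e : PM H = [set H] by rewrite (uP _ (PM_hpart hH sat)) (uP _ (hyp1_hpart ne)).
have : H \in PM H by rewrite e set11.
case/imsetP => Z /maxsP [ZH _] eH.
by rewrite {1}eH restr_cover.
Qed.

Lemma PM_finest H : hypergraph H -> saturated H -> finest_hpartition H (PM H).
Proof.
move=> hH sat; split; first exact: PM_hpart.
move=> B /imsetP [Z /maxsP [ZH _] ->]; apply: conn_cover.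
- exact: restr_hyp.
- by rewrite restr_cover // inE ZH subxx.
Qed.


Definition nested M H := forall S, antichain M S -> misses H S.

Lemma nested_sub M M' H H' : M' \subset M -> H' \subset H -> nested M H -> nested M' H'.
Proof.
move=> sM sH nM S [sS c a]; apply/negP => cS.
have : misses H S by apply: nM; split => //; exact: subset_trans sS sM.
by rewrite /misses (subsetP sH _ cS).
Qed.

Lemma restr_cover_sub H Y : cover (restr H Y) \subset Y.
Proof.
by apply/subsetP => x /bigcupP [X]; rewrite inE => /andP [_ XY] xX; apply: (subsetP XY).
Qed.

Lemma maxs_cover M : cover (maxs M) = cover M.
Proof.
apply/eqP; rewrite eqEsubset cover_sub ?maxs_sub //=.
apply/subsetP => x /bigcupP [X XM xX]; have [Z Zm XZ] := maxs_exists XM.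
by apply/bigcupP; exists Z => //; apply: (subsetP XZ).
Qed.

Lemma step H M :
  (forall H' M', #|cover H'| < #|cover H| -> hypergraph H' -> atomic H' ->
     saturated H' -> M' \subset H' -> nested M' H' ->
     exists K, construction H' K /\ M' \subset K) ->
  hypergraph H -> atomic H -> saturated H -> M \subset H -> nested M H ->
  exists K, construction H K /\ M \subset K.
Proof.
move=> IH hH atH sat sMH nM.
case: (eqVneq H set0) => [H0|Hn0].
  have -> : M = set0 by apply/eqP; rewrite -subset0 -H0.
  by exists set0; rewrite H0; split; [apply: constr_empty | apply: sub0set].
case: (boolP (cover H \in H)) => cH.
- set C := cover H.
  have C0 : C != set0 := hH _ cH.
  set M' := M :\ C.
  have sM'C : cover M' \subset C.
    apply: cover_sub; exact: (subset_trans (subD1set _ _) sMH).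
  have nCM : ~~ (C \subset cover M').
    apply/negP => sCM.
    have eC : cover M' = C by apply/eqP; rewrite eqEsubset sM'C sCM.
    set S := maxs M'.
    have cS : cover S = C by rewrite /S maxs_cover.
    case: (leqP 2 #|S|) => [c2|c1].
    + have aS : antichain M S.
        split => //.
        * exact: (subset_trans (maxs_sub _) (subD1set _ _)).
        * move=> X Y /maxsP [XM mX] /maxsP [YM _] XY.
          by apply/esym; apply: mX.
      by have := nM S aS; rewrite /misses cS cH.
    + case: (eqVneq S set0) => [S0|/set0Pn [Y YS]].
        by move: cS; rewrite S0 /cover big_set0 => e; rewrite -e eqxx in C0.
      have eS : S = [set Y].
        by apply/setP => Z; rewrite (card_le1P c1 Y YS) in_set1 inE.
      have /maxsP [YM' _] := YS.
      move: YM'; rewrite /M' in_setD1 => /andP [YC _].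
      by move: cS; rewrite eS cover1 => e; rewrite e eqxx in YC.
  have [x xC xM] := subsetPn nCM.
  set H' := restr H (C :\ x).
  have sM'H' : M' \subset H'.
    apply/subsetP => X XM'; rewrite inE (subsetP sMH X (subsetP (subD1set _ _) X XM')) /=.
    rewrite subsetD1 (subset_trans (sub_cover XM') sM'C) /=.
    by apply: contra xM => xX; apply/bigcupP; exists X.
  have lt : #|cover H'| < #|cover H|.
    apply: (leq_ltn_trans (subset_leq_card (restr_cover_sub _ _))).
    exact: proper_card (properD1 xC).
  have nM' : nested M' H' := nested_sub (subD1set _ _) (restr_sub _ _) nM.
  have [K' [cK' sK']] := IH H' M' lt (@restr_hyp H (C :\ x) hH) (@restr_atomic H (C :\ x) atH)
    (@restr_sat H (C :\ x) sat) sM'H' nM'.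
  exists (C |: K'); split.
  + have c0 : 0 < #|cover H| by rewrite card_gt0.
    exact: (@constr_conn _ H x K' atH c0 (conn_cover hH cH) xC cK').
  + apply/subsetP => X XM; case: (eqVneq X C) => [->|nX]; first exact: setU11.
    by apply: setU1r; apply: (subsetP sK'); rewrite in_setD1 nX XM.
- set P := PM H.
  have nconn : ~ connected H by move=> cn; rewrite (conn_cover_in hH sat cn Hn0) in cH.
  have HnP : H \notin P.
    apply/negP => /imsetP [Z /maxsP [ZH _] e].
    by move: cH; rewrite {1}e restr_cover // ZH.
  have [pP _] := PM_hpart hH sat.
  have c2 : 2 <= #|P|.
    case: (leqP 2 #|P|) => // c1.
    have [X XH] := set0Pn _ Hn0.
    have [B BP _] := part_in pP XH.
    have eP : P = [set B] by apply/setP => Z; rewrite (card_le1P c1 B BP) in_set1 inE.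
    have := cover_partition pP; rewrite -/P eP cover1 => eB.
    by move: HnP; rewrite eP eB set11.
  have ex : forall B, exists K, B \in P -> construction B K /\ M :&: B \subset K.
    move=> B; case: (boolP (B \in P)) => BP; last by exists set0.
    case/imsetP: (BP) => Z /maxsP [ZH _] eB.
    have lt : #|cover B| < #|cover H|.
      rewrite eB restr_cover //; apply: proper_card.
      rewrite properEneq sub_cover // andbT.
      by apply: contraNneq cH => <-.
    have h1 : hypergraph B by rewrite eB; exact: restr_hyp.
    have h2 : atomic B by rewrite eB; exact: restr_atomic.
    have h3 : saturated B by rewrite eB; exact: restr_sat.
    have [K [cK sK]] := IH B (M :&: B) lt h1 h2 h3 (subsetIr _ _)
      (nested_sub (subsetIl _ _) (part_sub pP BP) nM).
    by exists K.
  pose Kf B := proj1_sig (constructive_indefinite_description _ (ex B)).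
  have hK : forall B, B \in P -> construction B (Kf B) /\ M :&: B \subset Kf B.
    by move=> B; exact: (proj2_sig (constructive_indefinite_description _ (ex B))).
  exists (\bigcup_(B in P) Kf B); split.
  + apply: constr_split => //; first exact: PM_finest.
    by move=> B BP; case: (hK B BP).
  + apply/subsetP => X XM; have [B BP XB] := part_in pP (subsetP sMH X XM).
    apply/bigcupP; exists B => //; apply: (subsetP (hK B BP).2).
    by rewrite inE XM XB.
Qed.

Lemma main_dir n H M : #|cover H| <= n ->
  hypergraph H -> atomic H -> saturated H -> M \subset H -> nested M H ->
  exists K, construction H K /\ M \subset K.
Proof.
elim: n H M => [|n IHn] H M le; apply: step => H' M' lt.
- by move: (leq_trans lt le).
- by apply: IHn; rewrite -ltnS (leq_trans lt le).
Qed.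

End Aux.

Theorem proposition6p12 (T : finType) (H M : {set {set T}}) :
  ASC H -> M \subset H ->
  ((forall S : {set {set T}}, antichain M S -> misses H S) <->
   exists K : {set {set T}}, construction H K /\ M \subset K).
Proof.
case=> hH atH sat _ sMH; split.
- by move=> nM; apply: (main_dir (leqnn _)).
- case=> K [cK sMK] S [sS c a].
  have [_ inv] := constr_inv cK.
  by apply: inv => //; exact: (subset_trans sS sMK).
Qed.
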